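(* Let $n\ge1$. (i) Suppose $\mathcal{C}\subseteq\mathbb{F}_2^{n+1}$ is a union $\mathcal{C}=\bigcup_{i=0}^{\lfloor n/2\rfloor}\mathcal{C}_i$, where for each $i$, $\mathcal{C}_i$ is a covering design $\mathcal{C}(n+1,\,n+1-2i,\,n-2i)$ (a set of vectors of weight $n+1-2i$ such that every vector of weight $n-2i$ is covered by one of them). Then deleting any one fixed coordinate from all vectors of $\mathcal{C}$ yields a banded asymmetric covering $\mathcal{D}(n,1)$. (ii) Conversely, let $\mathcal{D}\subseteq\mathbb{F}_2^n$ be a banded asymmetric covering $\mathcal{D}(n,1)$. Append to each vector of $\mathcal{D}$ a final bit $0$ or $1$ chosen so that the resulting vector of length $n+1$ has even co-weight. Then, for each $0\le i\le\lfloor n/2\rfloor$, the resulting vectors of weight $n+1-2i$ form a covering design $\mathcal{C}(n+1,n+1-2i,n-2i)$.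
   Context: Subsets are identified with indicator vectors; weight is Hamming weight and the co-weight of $u\in\mathbb{F}_2^n$ is $n-\mathrm{wt}(u)$. A vector $u$ covers $v$ if the support of $v$ is contained in that of $u$. An asymmetric covering $\mathcal{D}(n,1)$ is a set $\mathcal{D}\subseteq\mathbb{F}_2^n$ such that every $v\in\mathbb{F}_2^n$ either lies in $\mathcal{D}$ or is covered by some $u\in\mathcal{D}$ with $\mathrm{wt}(u)=\mathrm{wt}(v)+1$. It is banded if every $v\in\mathbb{F}_2^n$ of odd co-weight is covered by some $u\in\mathcal{D}$ with $\mathrm{wt}(u)=\mathrm{wt}(v)+1$. A covering design $\mathcal{C}(v,k,t)$ is a collection of $k$-subsets of a $v$-set such that every $t$-subset is contained in at least one of them. *)

(* Defs.v *)
(* Vectors of F_2^n are identified with their supports,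
   i.e. elements of {set 'I_n}; weight = #|u|, co-weight = n - #|u|. *)
From mathcomp Require Import all_boot.
Set Implicit Arguments. Unset Strict Implicit. Unset Printing Implicit Defensive.

Definition covers (n : nat) (u v : {set 'I_n}) : bool := v \subset u.

Definition coweight (n : nat) (u : {set 'I_n}) : nat := n - #|u|.

Definition asym_covering (n : nat) (D : {set {set 'I_n}}) : Prop :=
  forall v : {set 'I_n},
    v \in D \/ exists2 u, u \in D & covers u v /\ #|u| = #|v|.+1.

Definition banded (n : nat) (D : {set {set 'I_n}}) : Prop :=
  forall v : {set 'I_n}, odd (coweight v) ->
    exists2 u, u \in D & covers u v /\ #|u| = #|v|.+1.

Definition banded_asym_covering (n : nat) (D : {set {set 'I_n}}) : Prop :=
  asym_covering D /\ banded D.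

Definition covering_design (v k t : nat) (C : {set {set 'I_v}}) : Prop :=
  (forall A, A \in C -> #|A| = k) /\
  (forall T : {set 'I_v}, #|T| = t -> exists2 A, A \in C & T \subset A).

Definition delete_coord (n : nat) (j : 'I_n.+1) (A : {set 'I_n.+1}) : {set 'I_n} :=
  [set i : 'I_n | lift j i \in A].

(* append a final bit to d so that the result has even co-weight:
   the last bit is 1 iff the co-weight of d is even *)
Definition append_even (n : nat) (d : {set 'I_n}) : {set 'I_n.+1} :=
  (lift ord_max @: d) :|: (if ~~ odd (coweight d) then [set ord_max] else set0).

(* Main.v *)
Require Import Defs.
From mathcomp Require Import all_boot.
From mathcomp Require Import zify.
Set Implicit Arguments. Unset Strict Implicit. Unset Printing Implicit Defensive.

Definition up (n : nat) (j : 'I_n.+1) (S : {set 'I_n}) (b : bool) : {set 'I_n.+1} :=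
  (lift j @: S) :|: (if b then [set j] else set0).

Lemma notin_lift_imset n (j : 'I_n.+1) (S : {set 'I_n}) : j \notin lift j @: S.
Proof.
apply/imsetP => [[y _ E]]. by move: (neq_lift j y); rewrite -E eqxx.
Qed.

Lemma card_up n (j : 'I_n.+1) S (b : bool) : #|up j S b| = #|S| + b.
Proof.
rewrite /up; case: b => /=.
  by rewrite setUC cardsU1 notin_lift_imset card_imset //; [rewrite addnC | exact: lift_inj].
by rewrite setU0 card_imset ?addn0 //; exact: lift_inj.
Qed.

Lemma decomp n (j : 'I_n.+1) (A : {set 'I_n.+1}) : A = up j (delete_coord j A) (j \in A).
Proof.
apply/setP => x; rewrite /up inE.
case: (unliftP j x) => [y ->|->].
  rewrite mem_imset; last exact: lift_inj.
  rewrite inE; case: (j \in A); rewrite ?inE ?orbF //.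
  by rewrite eq_sym (negbTE (neq_lift j y)) orbF.
rewrite (negbTE (notin_lift_imset _ _)) /=.
by case E: (j \in A); rewrite ?inE ?eqxx.
Qed.

Lemma card_delete n (j : 'I_n.+1) (A : {set 'I_n.+1}) : #|A| = #|delete_coord j A| + (j \in A).
Proof. by rewrite {1}(decomp j A) card_up. Qed.

Lemma subset_up n (j : 'I_n.+1) (S S' : {set 'I_n}) (b b' : bool) :
  S \subset S' -> (b -> b') -> up j S b \subset up j S' b'.
Proof.
move=> /subsetP sS hb; apply/subsetP => x; rewrite /up !inE.
case/orP => [/imsetP [y yS ->]|].
  by rewrite mem_imset ?sS //; exact: lift_inj.
case: b hb => [/(_ isT) -> | _]; last by rewrite inE.
by rewrite !inE => ->; rewrite orbT.
Qed.

Lemma up_sub_delete n (j : 'I_n.+1) (v : {set 'I_n}) (b : bool) (A : {set 'I_n.+1}) :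
  up j v b \subset A -> v \subset delete_coord j A /\ (b -> j \in A).
Proof.
move=> /subsetP H; split.
  apply/subsetP => y yv; rewrite inE; apply: H.
  by rewrite /up inE mem_imset ?yv //; exact: lift_inj.
by move=> hb; apply: H; rewrite /up hb !inE eqxx orbT.
Qed.

Lemma card_le n (v : {set 'I_n}) : #|v| <= n.
Proof. by have := max_card v; rewrite card_ord. Qed.

Lemma odd_split k : exists h, k = 2 * h + odd k.
Proof. exists k./2; have := odd_double_half k; rewrite -mul2n; lia. Qed.

Lemma odd2 m : odd (2 * m) = false.
Proof. by rewrite mul2n odd_double. Qed.

Lemma half_le i n : (i <= n./2) = (2 * i <= n).
Proof. by rewrite geq_half_double mul2n. Qed.

Ltac clia :=
  repeat match goal with
  | H : @eq nat _ _ |- _ => revert H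
  | H : is_true (leq _ _) |- _ => revert H
  end;
  repeat match goal with |- context[#|?x|] =>
    let k := fresh "k" in set k := #|x|; clearbody k end;
  intros; lia.

Theorem theorem3 (n : nat) (hn : 0 < n) :
  (forall (Cs : nat -> {set {set 'I_n.+1}}) (j : 'I_n.+1),
     (forall i, i <= n./2 -> covering_design (n.+1 - 2 * i) (n - 2 * i) (Cs i)) ->
     banded_asym_covering
       (delete_coord j @: (\bigcup_(i < n./2.+1) Cs i)))
  /\
  (forall D : {set {set 'I_n}},
     banded_asym_covering D ->
     forall i, i <= n./2 ->
       covering_design (n.+1 - 2 * i) (n - 2 * i)
         [set append_even d | d in D & #|append_even d| == n.+1 - 2 * i]).
Proof.
split.
  move=> Cs j HC.
  have inD : forall i A, i <= n./2 -> A \in Cs i ->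
      delete_coord j A \in delete_coord j @: (\bigcup_(i < n./2.+1) Cs i).
    move=> i A hi hA; apply/imsetP; exists A => //.
    by apply/bigcupP; exists (Ordinal (hi : i < n./2.+1)).
  have hband : banded (delete_coord j @: (\bigcup_(i < n./2.+1) Cs i)).
    move=> v; rewrite /coweight => hodd.
    have [h Eh] := odd_split (n - #|v|); rewrite hodd /= in Eh.
    have hv := card_le v.
    have hi : h <= n./2 by rewrite half_le; clia.
    have [H1 H2] := HC h hi.
    have [|A hA sA] := H2 (up j v true); first by rewrite card_up /=; clia.
    have [sv jA] := up_sub_delete sA.
    exists (delete_coord j A); first exact: inD hA.
    split => //; have := card_delete j A; rewrite H1 // jA /=; clia.
  split => // v.
  case hodd: (odd (coweight v)); first by right; apply: hband; rewrite hodd.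
  move: hodd; rewrite /coweight => hodd.
  have [h Eh] := odd_split (n - #|v|); rewrite hodd /= addn0 in Eh.
  have hv := card_le v.
  have hi : h <= n./2 by rewrite half_le; clia.
  have [H1 H2] := HC h hi.
  have [|A hA sA] := H2 (up j v false); first by rewrite card_up /=; clia.
  have [sv _] := up_sub_delete sA.
  have := card_delete j A; rewrite H1 //.
  case: (j \in A) => /= hc.
    left; suff -> : v = delete_coord j A by exact: inD hA.
    apply/eqP; rewrite eqEcard sv /=; clia.
  right; exists (delete_coord j A); first exact: inD hA.
  split => //; clia.
move=> D [Hasym Hband] i hi; rewrite half_le in hi.
split.
  by move=> A /imsetP [d]; rewrite inE => /andP [_ /eqP hd] ->.
move=> T hT.
have := card_up ord_max (delete_coord ord_max T) (ord_max \in T).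
rewrite -decomp hT.
set v := delete_coord ord_max T.
have hv := card_le v.
have ET := decomp ord_max T.
have mem : forall d, d \in D -> #|append_even d| = n.+1 - 2 * i ->
    append_even d \in [set append_even d | d in D & #|append_even d| == n.+1 - 2 * i].
  by move=> d dD hd; apply/imsetP; exists d => //; rewrite inE dD hd eqxx.
case b: (ord_max \in T) => /= hc; rewrite b in ET.
  have [|u uD [su hu]] := Hband v.
    rewrite /coweight; have -> : n - #|v| = 2 * i + 1 by clia.
    by rewrite addn1 /= odd2.
  have hcw : odd (coweight u) = false.
    rewrite /coweight; have -> : n - #|u| = 2 * i by clia.
    by rewrite odd2.
  exists (append_even u).
    apply: mem => //; rewrite /append_even hcw -/(up _ _ true) card_up /=; clia.
  by rewrite ET /append_even hcw -/(up _ _ true); apply: subset_up.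
have hcv : odd (coweight v) = false.
  rewrite /coweight; have -> : n - #|v| = 2 * i by clia.
    by rewrite odd2.
case: (Hasym v) => [vD|[u uD [su hu]]].
  exists (append_even v).
    apply: mem => //; rewrite /append_even hcv -/(up _ _ true) card_up /=; clia.
  by rewrite ET /append_even hcv -/(up _ _ true); apply: subset_up.
have hu' := card_le u.
have hcw : odd (coweight u) = true.
  rewrite /coweight; have -> : n - #|u| = (2 * (i - 1)).+1 by clia.
  by rewrite /= odd2.
exists (append_even u).
  apply: mem => //; rewrite /append_even hcw -/(up _ _ false) card_up /=; clia.
by rewrite ET /append_even hcw -/(up _ _ false); apply: subset_up.
Qed.
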